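(* Let $\mathcal{Z}=\{z_1,\dots,z_K\}$ with counting measure, $P$ a probability on $\mathcal{Z}$, and for a fixed noise level $\sigma$ let $q_{\sigma\mid0}(\cdot\mid z_0)$ be a Markov kernel on $\mathcal{Z}$ such that the corrupted marginal $P_\sigma(z)=\sum_{z_0}P(z_0)q_{\sigma\mid0}(z\mid z_0)$ satisfies $P_\sigma(z_i)>0$ for all $i$. Let $(\omega_{ij})$ be a symmetric Markov kernel: $\omega_{ij}=\omega_{ji}\ge0$, $\sum_j\omega_{ij}=1$, and write $\omega(\cdot\mid z_i)=(\omega_{ij})_j$. Define, for $g:\mathcal{Z}\to\mathbb{R}$, $$\mathcal{L}_\sigma(g)=\mathbb{E}_{z_0\sim P}\,\mathbb{E}_{z_\sigma\sim q_{\sigma\mid0}(\cdot\mid z_0)}\,\mathbb{E}_{\tilde z\sim\omega(\cdot\mid z_\sigma)}\left[\tanh\!\left(\frac{g(z_\sigma)-g(\tilde z)}{2}\right)-1\right]^2.$$ Then $\mathcal{L}_\sigma(g)=\sum_{i,j}P_\sigma(z_i)\omega_{ij}\left[\tanh\!\left(\frac{g(z_i)-g(z_j)}{2}\right)-1\right]^2$, and $g$ minimizes $\mathcal{L}_\sigma$ over all functions $\mathcal{Z}\to\mathbb{R}$ if and only if $g(z_i)-\log P_\sigma(z_i)$ is constant on each connected component of the graph on $\{1,\dots,K\}$ with edges $\{i,j\}$, $i\ne j$, for which $\omega_{ij}>0$. *)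

(* Defs.v *)
From mathcomp Require Import all_boot all_order all_algebra.
From mathcomp Require Import all_classical all_reals all_analysis.
Set Implicit Arguments. Unset Strict Implicit. Unset Printing Implicit Defensive.
Import Order.TTheory GRing.Theory Num.Theory.
Local Open Scope ring_scope.

(* The state space Z = {z_1,...,z_K} is modelled by the finite type 'I_K
   (z_i <-> index i).  Functions on Z are functions 'I_K -> R. *)

Definition tanh {R : realType} (x : R) : R :=
  (expR x - expR (- x)) / (expR x + expR (- x)).

Definition is_prob {R : realType} {K : nat} (P : 'I_K -> R) : Prop :=
  (forall z, 0 <= P z) /\ \sum_(z < K) P z = 1.

(* k is a Markov kernel on Z : k x y = k(y | x) *)
Definition is_markov_kernel {R : realType} {K : nat} (k : 'I_K -> 'I_K -> R)
  : Prop :=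
  (forall x y, 0 <= k x y) /\ (forall x, \sum_(y < K) k x y = 1).

Definition Psigma {R : realType} {K : nat} (P : 'I_K -> R)
  (q : 'I_K -> 'I_K -> R) (z : 'I_K) : R :=
  \sum_(z0 < K) P z0 * q z0 z.

Definition Lsigma {R : realType} {K : nat} (P : 'I_K -> R)
  (q : 'I_K -> 'I_K -> R) (omega : 'I_K -> 'I_K -> R) (g : 'I_K -> R) : R :=
  \sum_(z0 < K) P z0 *
    \sum_(zs < K) q z0 zs *
      \sum_(zt < K) omega zs zt *
        (tanh ((g zs - g zt) / 2) - 1) ^+ 2.

Definition omega_edge {R : realType} {K : nat} (omega : 'I_K -> 'I_K -> R)
  : rel 'I_K :=
  fun i j => (i != j) && (0 < omega i j).

(* Main.v *)
Require Import Defs.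
From mathcomp Require Import all_boot all_order all_algebra.
From mathcomp Require Import all_classical all_reals all_analysis.
From mathcomp Require Import ring lra.
Import Order.TTheory GRing.Theory Num.Theory.
Local Open Scope ring_scope.

Lemma tanh_sub (R : realType) (a b : R) :
  (tanh ((a - b) / 2) - 1) ^+ 2 = 4 * (expR b / (expR b + expR a)) ^+ 2.
Proof.
have ha : expR a = expR ((a - b) / 2) * expR ((a + b) / 2).
  by rewrite -expRD; congr expR; field.
have hb : expR b = expR (- ((a - b) / 2)) * expR ((a + b) / 2).
  by rewrite -expRD; congr expR; field.
rewrite /tanh ha hb.
move: (expR_gt0 ((a - b) / 2)) (expR_gt0 (- ((a - b) / 2))) (expR_gt0 ((a + b) / 2)).
set e := expR _; set f := expR _; set m := expR _ => e0 f0 m0.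
have h1 : e + f != 0 by rewrite gt_eqF // addr_gt0.
have h2 : f * m + e * m != 0 by rewrite gt_eqF // addr_gt0 // mulr_gt0.
by field; rewrite h1 h2.
Qed.

Lemma pair_id (R : realFieldType) (w pi pj ei ej : R) :
  0 < pi -> 0 < pj -> 0 < ei -> 0 < ej ->
  pi * w * (4 * (ej / (ej + ei)) ^+ 2) + pj * w * (4 * (ei / (ei + ej)) ^+ 2)
  = w * (4 * (pi * pj / (pi + pj)))
    + 4 * (w * ((pi + pj) * (ei / (ei + ej) - pi / (pi + pj)) ^+ 2)).
Proof.
move=> hi hj hei hej.
have h1 : pi + pj != 0 by rewrite gt_eqF // addr_gt0.
have h2 : ei + ej != 0 by rewrite gt_eqF // addr_gt0.
have h3 : ej + ei != 0 by rewrite gt_eqF // addr_gt0.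
by field; rewrite ?h1 ?h2 ?h3.
Qed.

Lemma s_eq (R : realType) (a b pi pj : R) : 0 < pi -> 0 < pj ->
  (expR a / (expR a + expR b) = pi / (pi + pj)) <-> (a - ln pi = b - ln pj).
Proof.
move=> hi hj.
have ea : expR a = expR (a - ln pi) * pi.
  have hpi : expR (ln pi) = pi by rewrite lnK // posrE.
  by rewrite -{2}hpi -expRD subrK.
have eb : expR b = expR (b - ln pj) * pj.
  have hpj : expR (ln pj) = pj by rewrite lnK // posrE.
  by rewrite -{2}hpj -expRD subrK.
rewrite ea eb.
move: (expR_gt0 (a - ln pi)) (expR_gt0 (b - ln pj)).
set u := a - ln pi; set v := b - ln pj; set eu := expR u; set ev := expR v.
move=> hu hv.
have h1 : pi + pj != 0 by rewrite gt_eqF // addr_gt0.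
have h2 : eu * pi + ev * pj != 0 by rewrite gt_eqF // addr_gt0 // mulr_gt0.
split; last first.
  by move=> uv; rewrite /eu /ev uv; field; rewrite -/ev h1 gt_eqF // addr_gt0 // mulr_gt0.
move=> H.
have H' : eu * pi * (pi + pj) = pi * (eu * pi + ev * pj).
  have e1 : eu*pi*(pi+pj) = eu*pi/(eu*pi+ev*pj) * (eu*pi+ev*pj) * (pi+pj).
    by field.
  have e2 : pi*(eu*pi+ev*pj) = pi/(pi+pj)*(eu*pi+ev*pj)*(pi+pj) by field.
  by rewrite e1 e2 H.
have Z : pi * pj * (eu - ev) = eu * pi * (pi + pj) - pi * (eu * pi + ev * pj) by ring.
rewrite H' subrr in Z.
apply: expR_inj; apply/eqP; rewrite -subr_eq0.
move/eqP: Z; rewrite !mulf_eq0 (gt_eqF hi) (gt_eqF hj). by [].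
Qed.

Lemma connect_const (T : finType) (R : Type) (e : rel T) (h : T -> R) :
  (forall x y, e x y -> h x = h y) -> forall i j, connect e i j -> h i = h j.
Proof.
move=> H i j /connectP [pth Hp ->].
elim: pth i Hp => [|y pth IH] x //= /andP [exy hp].
by rewrite (H _ _ exy); exact: IH.
Qed.

Theorem mainTheorem8 (R : realType) (K : nat)
  (P : 'I_K -> R) (q : 'I_K -> 'I_K -> R) (omega : 'I_K -> 'I_K -> R)
  (hP : is_prob P) (hq : is_markov_kernel q)
  (hPs : forall i, 0 < Psigma P q i)
  (hom : is_markov_kernel omega)
  (hsym : forall i j, omega i j = omega j i) :
  (forall g : 'I_K -> R,
     Lsigma P q omega g =
       \sum_(i < K) \sum_(j < K)
         Psigma P q i * omega i j * (tanh ((g i - g j) / 2) - 1) ^+ 2)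
  /\
  (forall g : 'I_K -> R,
     (forall h : 'I_K -> R, Lsigma P q omega g <= Lsigma P q omega h) <->
     (forall i j, connect (omega_edge omega) i j ->
        g i - ln (Psigma P q i) = g j - ln (Psigma P q j))).
Proof.
have part1 : forall g : 'I_K -> R,
     Lsigma P q omega g =
       \sum_(i < K) \sum_(j < K)
         Psigma P q i * omega i j * (tanh ((g i - g j) / 2) - 1) ^+ 2.
  move=> g; rewrite /Lsigma.
  under eq_bigr do rewrite big_distrr.
  rewrite exchange_big /=; apply: eq_bigr => i _.
  under eq_bigr do rewrite mulrA.
  rewrite -big_distrl /=.
  under [RHS]eq_bigr do rewrite -mulrA.
  by rewrite -big_distrr.
split => // g.
set p := Psigma P q.
have hw := hom.1.
pose S (g : 'I_K -> R) := \sum_(i < K) \sum_(j < K)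
         p i * omega i j * (tanh ((g i - g j) / 2) - 1) ^+ 2.
pose s (g : 'I_K -> R) i j := expR (g i) / (expR (g i) + expR (g j)).
pose D (g : 'I_K -> R) := \sum_(i < K) \sum_(j < K)
   omega i j * ((p i + p j) * (s g i j - p i / (p i + p j)) ^+ 2).
pose C := \sum_(i < K) \sum_(j < K) omega i j * (4 * (p i * p j / (p i + p j))).
have E : forall g, S g + S g = C + 4 * D g.
  move=> f; rewrite {2}/S exchange_big /= -big_split /= /C /D big_distrr -big_split /=.
  apply: eq_bigr => i _; rewrite -big_split big_distrr -big_split /=.
  apply: eq_bigr => j _.
  rewrite (hsym j i) !tanh_sub pair_id //; exact: expR_gt0.
have D0 : forall g, 0 <= D g.
  move=> f; apply: sumr_ge0 => i _; apply: sumr_ge0 => j _.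
  apply: mulr_ge0 => //; apply: mulr_ge0; last exact: sqr_ge0.
  by apply: addr_ge0; apply: ltW.
have Dln : D (fun i => ln (p i)) = 0.
  apply: big1 => i _; apply: big1 => j _.
  by rewrite /s !lnK ?posrE // subrr expr0n /= !mulr0.
have key : forall h, S g <= S h <-> D g <= D h.
  move=> h; have Eg := E g; have Eh := E h; split => H; lra.
have Dz : D g = 0 <-> forall i j, 0 < omega i j -> g i - ln (p i) = g j - ln (p j).
  split.
    move=> HD i j wpos.
    have T1 : forall i, 0 <= \sum_(j < K) omega i j * ((p i + p j) * (s g i j - p i / (p i + p j)) ^+ 2).
      move=> i'; apply: sumr_ge0 => j' _; apply: mulr_ge0 => //; apply: mulr_ge0; last exact: sqr_ge0.
      by apply: addr_ge0; apply: ltW.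
    have Hi : \sum_(j < K) omega i j * ((p i + p j) * (s g i j - p i / (p i + p j)) ^+ 2) = 0.
      by apply: (psumr_eq0P _ HD) => // i' _; exact: T1.
    have : omega i j * ((p i + p j) * (s g i j - p i / (p i + p j)) ^+ 2) = 0.
      apply: (psumr_eq0P _ Hi) => // j' _.
      apply: mulr_ge0 => //; apply: mulr_ge0; last exact: sqr_ge0.
      by apply: addr_ge0; apply: ltW.
    move/eqP; rewrite !mulf_eq0 (gt_eqF wpos) (gt_eqF (addr_gt0 (hPs i) (hPs j))) /=.
    rewrite orbb subr_eq0 => /eqP.
    by move/(@s_eq _ _ _ _ _ (hPs i) (hPs j)).
  move=> H; apply: big1 => i _; apply: big1 => j _.
  have := hw i j; rewrite le_eqVlt => /orP [/eqP <-|wpos]; first by rewrite mul0r.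
  by rewrite /s (proj2 (@s_eq _ _ _ _ _ (hPs i) (hPs j)) (H i j wpos)) subrr expr0n /= !mulr0.
split.
- move=> Hmin i j; apply: (@connect_const _ _ _ (fun k => g k - ln (p k))) => x y /andP [_ wpos].
  have : D g <= D (fun i => ln (p i)).
    by apply/key; rewrite /S /p -!part1; exact: Hmin.
  rewrite Dln => Dle.
  have HD : D g = 0 by apply/eqP; rewrite eq_le Dle D0.
  exact: (proj1 Dz HD).
- move=> Hc h; rewrite !part1; apply/key.
  have -> : D g = 0.
    apply/Dz => i j wpos.
    have [->//|ne] := eqVneq i j.
    by apply: Hc; apply: connect1; rewrite /omega_edge ne.
  exact: D0.
Qed.
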